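(* Let $(X,\mathcal{O}(X))$ be a measurable space, $\mathcal{A}$ a unital $C^*$-algebra and $\mathcal{H}$ a Hilbert space. Let $\pi:\mathcal{A}\to\mathcal{B}(\mathcal{H})$ be a unital $*$-homomorphism and $E:\mathcal{O}(X)\to\mathcal{B}(\mathcal{H})$ a spectral measure with $E(A)\pi(a)=\pi(a)E(A)$ for all $A,a$, and let $\pi E$ be the spectral instrument $\pi E(A,a)=\pi(a)E(A)$. Then the following are equivalent: (i) $\pi E$ is irreducible; (ii) $\pi$ is an irreducible representation of $\mathcal{A}$. Furthermore, in this case $E(\mathcal{O}(X))\subseteq\{0,I_\mathcal{H}\}$.
   Context: The spectral instrument $\pi E$ is called irreducible if it has no proper invariant subspace, equivalently $\{\pi(a)E(A):a\in\mathcal{A},A\in\mathcal{O}(X)\}'=\mathbb{C}I_\mathcal{H}$. A spectral measure is a projection-valued measure. *)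

(* Defs.v *)
From HB Require Import structures.
From mathcomp Require Import all_boot all_order all_algebra.
From mathcomp Require Import all_classical all_reals all_analysis.
From mathcomp Require Import complex.
Set Implicit Arguments. Unset Strict Implicit. Unset Printing Implicit Defensive.
Import Order.TTheory GRing.Theory Num.Theory.
Import numFieldNormedType.Exports.
Local Open Scope classical_set_scope.
Local Open Scope ring_scope.
Local Open Scope complex_scope.

Section Defs.
Variable R : realType.
Local Notation C := (R[i]).

Record inner_product (H : normedModType C) (ip : H -> H -> C) : Prop := {
  ip_linear_l : forall (y : H) (k : C) (x1 x2 : H),
      ip (k *: x1 + x2) y = k * ip x1 y + ip x2 y;
  ip_conj_sym : forall x y : H, ip y x = (ip x y)^*;
  ip_norm : forall x : H, ip x x = `|x| ^+ 2 }.

Definition hilbert_space (H : completeNormedModType C) (ip : H -> H -> C) :=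
  inner_product ip.

Definition bounded_op (H : normedModType C) (T : H -> H) : Prop :=
  (forall (k : C) (x y : H), T (k *: x + y) = k *: T x + T y) /\ continuous T.

Definition is_adjoint (H : normedModType C) (ip : H -> H -> C) (T S : H -> H) :=
  forall x y : H, ip (T x) y = ip x (S y).

Record unital_cstar_algebra (A : completeNormedModType C)
    (mul : A -> A -> A) (one : A) (star : A -> A) : Prop := {
  cs_mulA : forall a b c, mul a (mul b c) = mul (mul a b) c;
  cs_mul1l : forall a, mul one a = a;
  cs_mul1r : forall a, mul a one = a;
  cs_mull_linear : forall (k : C) a b c, mul (k *: a + b) c = k *: mul a c + mul b c;
  cs_mulr_linear : forall (k : C) a b c, mul a (k *: b + c) = k *: mul a b + mul a c;
  cs_norm_submul : forall a b, `|mul a b| <= `|a| * `|b|;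
  cs_starK : forall a, star (star a) = a;
  cs_star_antilinear : forall (k : C) a b, star (k *: a + b) = (k^*) *: star a + star b;
  cs_star_mul : forall a b, star (mul a b) = mul (star b) (star a);
  cs_cstar : forall a, `|mul (star a) a| = `|a| ^+ 2 }.

Record unital_star_hom (A : completeNormedModType C) (mul : A -> A -> A)
    (one : A) (star : A -> A) (H : completeNormedModType C)
    (ip : H -> H -> C) (pi : A -> (H -> H)) : Prop := {
  sh_bounded : forall a, bounded_op (pi a);
  sh_linear : forall (k : C) a b, pi (k *: a + b) = (fun x => k *: pi a x + pi b x);
  sh_mul : forall a b, pi (mul a b) = pi a \o pi b;
  sh_one : pi one = id;
  sh_star : forall a, is_adjoint ip (pi a) (pi (star a)) }.

(** Spectral (projection-valued) measure on a measurable space X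
    (only its values on measurable sets matter); countable additivity in
    the strong operator topology. *)
Record spectral_measure d (X : measurableType d) (H : completeNormedModType C)
    (ip : H -> H -> C) (E : set X -> (H -> H)) : Prop := {
  sm_bounded : forall A, measurable A -> bounded_op (E A);
  sm_idem : forall A, measurable A -> E A \o E A = E A;
  sm_selfadjoint : forall A, measurable A -> is_adjoint ip (E A) (E A);
  sm_total : E setT = id;
  sm_sigma_additive : forall F : nat -> set X,
      (forall n, measurable (F n)) -> trivIset setT F ->
      forall x : H,
        (fun n => \sum_(k < n) E (F k) x) @ \oo --> E (\bigcup_n F n) x }.

Definition invariant_subspace (H : normedModType C) (S : set (H -> H)) (V : set H) :=
  [/\ V 0, (forall (k : C) x y, V x -> V y -> V (k *: x + y)), closed V
    & forall T, S T -> forall x, V x -> V (T x)].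

Definition irreducible_family (H : normedModType C) (S : set (H -> H)) :=
  forall V : set H, invariant_subspace S V -> V = [set 0] \/ V = setT.

Definition spectral_instrument d (X : measurableType d) (A : Type)
    (H : normedModType C) (pi : A -> (H -> H)) (E : set X -> (H -> H))
    (B : set X) (a : A) : H -> H := pi a \o E B.

Definition instrument_irreducible d (X : measurableType d) (A : Type)
    (H : normedModType C) (pi : A -> (H -> H)) (E : set X -> (H -> H)) :=
  irreducible_family
    [set T | exists B a, measurable B /\ T = spectral_instrument pi E B a].

Definition irreducible_rep (A : Type) (H : normedModType C) (pi : A -> (H -> H)) :=
  irreducible_family (range pi).

End Defs.

(* Main.v *)
Require Import Defs.
From HB Require Import structures.
From mathcomp Require Import all_boot all_order all_algebra.
From mathcomp Require Import all_classical all_reals all_analysis.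
From mathcomp Require Import complex.
From Stdlib Require Classical_Prop.
Import Order.TTheory GRing.Theory Num.Theory.
Import numFieldNormedType.Exports.
Local Open Scope classical_set_scope.
Local Open Scope ring_scope.
Local Open Scope complex_scope.

Lemma bop_add {R : realType} {H : normedModType R[i]} {T : H -> H} :
  bounded_op T -> forall x y, T (x + y) = T x + T y.
Proof. by move=> [lin _] x y; have := lin 1 x y; rewrite !scale1r. Qed.

Lemma bop_0 {R : realType} {H : normedModType R[i]} {T : H -> H} :
  bounded_op T -> T 0 = 0.
Proof.
move=> hT; have := bop_add hT 0 0; rewrite addr0.
by move/(congr1 (fun z => z - T 0)); rewrite subrr addrK.
Qed.

Lemma half0 {R : realType} {H : normedModType R[i]} (v : H) : v + v = 0 -> v = 0.
Proof.
move=> h; have : (1 + 1 : R[i]) *: v = 0 by rewrite scalerDl scale1r.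
move/eqP; rewrite scaler_eq0 => /orP[|/eqP //].
move/eqP=> /(congr1 (fun z : R[i] => complex.Re z)) /=.
by move/eqP; rewrite paddr_eq0 // oner_eq0.
Qed.

Lemma orth {R : realType} {H : normedModType R[i]} {P Q : H -> H} :
  bounded_op P -> bounded_op Q -> P \o P = P -> Q \o Q = Q ->
  (forall x, P x + Q x = P (P x + Q x) + Q (P x + Q x)) ->
  forall x, P (Q x) = 0.
Proof.
move=> hP hQ PP QQ S.
have PPx y : P (P y) = P y by rewrite -[in RHS]PP.
have QQx y : Q (Q y) = Q y by rewrite -[in RHS]QQ.
have st y : P (Q y) + Q (P y) = 0.
  have := S y; rewrite !(bop_add hP) !(bop_add hQ) PPx QQx => h.
  apply/(@addrI _ (P y + Q y)); rewrite addr0 {2}h.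
  by rewrite addrACA [Q y + _]addrC addrACA.
have e1 y : P (Q y) + P (Q (P y)) = 0.
  by have := congr1 P (st y); rewrite (bop_add hP) (bop_0 hP) PPx.
have e2 y : P (Q (P y)) + Q (P y) = 0 by rewrite -{2}(PPx y) st.
move=> x; apply: half0.
rewrite {2}(_ : P (Q x) = Q (P x)) ?st //.
by apply: (@addrI _ (P (Q (P x)))); rewrite addrC e1 e2.
Qed.

Lemma E0 {R : realType} {d} {X : measurableType d} {H : completeNormedModType R[i]}
  {ip : H -> H -> R[i]} {E : set X -> (H -> H)} :
  spectral_measure ip E -> forall x, E set0 x = 0.
Proof.
move=> hE x.
have tI : trivIset setT (fun _ : nat => @set0 X) by move=> i j _ _ [z [[]]].
have h := sm_sigma_additive hE (F := fun=> set0) (fun=> measurable0) tI (x := x).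
rewrite bigcup0 // in h.
set v := E set0 x in h *.
have e : (fun n => \sum_(k < n) v) = (fun n => v *+ n).
  by apply/funext => n; rewrite sumr_const card_ord.
rewrite e in h.
have h2 : (fun n => v *+ n.+1) @ \oo --> v by rewrite -cvg_shiftS in h.
have h3 := cvgB h2 h.
rewrite (_ : _ - _ = fun=> v) ?subrr in h3; last first.
  by apply/funext => n; rewrite !fctE /= mulrS addrK.
exact: (cvg_unique (@norm_hausdorff _ _) (cvg_cst _) (h3 eventually_filter)).
Qed.

Lemma Eadd {R : realType} {d} {X : measurableType d} {H : completeNormedModType R[i]}
  {ip : H -> H -> R[i]} {E : set X -> (H -> H)} :
  spectral_measure ip E -> forall B1 B2 : set X, measurable B1 -> measurable B2 ->
  B1 `&` B2 = set0 -> forall x, E (B1 `|` B2) x = E B1 x + E B2 x.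
Proof.
move=> hE B1 B2 mB1 mB2 dB x.
pose F n : set X := if n == 0%N then B1 else if n == 1%N then B2 else set0.
have mF n : measurable (F n) by rewrite /F; case: ifP => // _; case: ifP.
have tF : trivIset setT F.
  move=> [|[|i]] [|[|j]] _ _ //= [z []] //=; rewrite /F /=.
  - by move=> z1 z2; have : (B1 `&` B2) z by []; rewrite dB.
  - by move=> z2 z1; have : (B1 `&` B2) z by []; rewrite dB.
have h := sm_sigma_additive hE mF tF (x := x).
have eU : \bigcup_n F n = B1 `|` B2.
  apply/seteqP; split => z.
    by move=> [[|[|n]] _ //=]; rewrite /F /=; [left|right].
  by move=> [b1|b2]; [exists 0%N|exists 1%N].
rewrite eU -(cvg_shiftn 2) in h.
have e : (fun n => \sum_(k < n + 2) E (F k) x) = fun=> E B1 x + E B2 x.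
  apply/funext => n; rewrite addn2 2!big_ord_recl /= big1 ?addr0 //.
  by move=> i _; exact: (E0 hE).
rewrite /= e in h.
exact: (cvg_unique (@norm_hausdorff _ _) h (cvg_cst _)).
Qed.

Lemma orth2 {R : realType} {H : normedModType R[i]} {P Q T : H -> H} :
  bounded_op P -> bounded_op Q -> P \o P = P -> Q \o Q = Q -> T \o T = T ->
  (forall y, T y = P y + Q y) -> forall x, P (Q x) = 0 /\ Q (P x) = 0.
Proof.
move=> hP hQ PP QQ TT eT x; split.
  apply: (orth hP hQ PP QQ) => y; rewrite -!eT.
  by rewrite -[in LHS]TT.
have eT' y : T y = Q y + P y by rewrite addrC eT.
apply: (orth hQ hP QQ PP) => y; rewrite -!eT'.
by rewrite -[in LHS]TT.
Qed.

Lemma sE {X : Type} (S1 S2 : set X) : (forall z, S1 z <-> S2 z) -> S1 = S2.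
Proof. by move=> h; apply/funext => z; apply/propext. Qed.

Lemma Ecomm {R : realType} {d} {X : measurableType d} {H : completeNormedModType R[i]}
  {ip : H -> H -> R[i]} {E : set X -> (H -> H)} :
  spectral_measure ip E -> forall B C : set X, measurable B -> measurable C ->
  forall x, E C (E B x) = E B (E C x).
Proof.
move=> hE B C mB mC.
have mBc := measurableC mB; have mCc := measurableC mC.
have bo S : measurable S -> bounded_op (E S) by move=> mS; exact: (sm_bounded hE mS).
have idm S : measurable S -> E S \o E S = E S by move=> mS; exact: (sm_idem hE mS).
have mI S1 S2 : measurable S1 -> measurable S2 -> measurable (S1 `&` S2).
  by move=> ? ?; exact: measurableI.
pose P := E (C `&` B); pose Q := E (C `&` ~` B).
pose R1 := E (B `&` ~` C); pose R2 := E (~` B `&` ~` C).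
have eB y : E B y = P y + R1 y.
  rewrite /P /R1 -(Eadd hE _ _ (measurableI _ _ mC mB) (measurableI _ _ mB mCc)); last first.
    by apply: sE => z; rewrite /setI /setC /set0 /=; tauto.
  by congr (E _ _); apply: sE => z; have := Classical_Prop.classic (C z); rewrite /setI /setU /setC /=; tauto.
have eBc y : E (~` B) y = Q y + R2 y.
  rewrite /Q /R2 -(Eadd hE _ _ (measurableI _ _ mC mBc) (measurableI _ _ mBc mCc)); last first.
    by apply: sE => z; rewrite /setI /setC /set0 /=; tauto.
  by congr (E _ _); apply: sE => z; have := Classical_Prop.classic (C z); rewrite /setI /setU /setC /=; tauto.
have eC y : E C y = P y + Q y.
  rewrite /P /Q -(Eadd hE _ _ (measurableI _ _ mC mB) (measurableI _ _ mC mBc)); last first.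
    by apply: sE => z; rewrite /setI /setC /set0 /=; tauto.
  by congr (E _ _); apply: sE => z; have := Classical_Prop.classic (B z); rewrite /setI /setU /setC /=; tauto.
have eI y : y = E B y + E (~` B) y.
  rewrite -(Eadd hE _ _ mB mBc); last first.
    by apply: sE => z; rewrite /setI /setC /set0 /=; tauto.
  by rewrite setUv (sm_total hE).
have m1 := measurableI _ _ mC mB; have m2 := measurableI _ _ mB mCc.
have m3 := measurableI _ _ mC mBc; have m4 := measurableI _ _ mBc mCc.
have o1 y := orth2 (bo _ m1) (bo _ m2) (idm _ m1) (idm _ m2) (idm _ mB) eB y.
have o2 y := orth2 (bo _ m3) (bo _ m4) (idm _ m3) (idm _ m4) (idm _ mBc) eBc y.
have o3 y := orth2 (T := id) (bo _ mB) (bo _ mBc) (idm _ mB) (idm _ mBc) erefl eI y.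
have o1a z : P (R1 z) = 0 := (o1 z).1.
have o1b z : R1 (P z) = 0 := (o1 z).2.
have o2a z : Q (R2 z) = 0 := (o2 z).1.
have o2b z : R2 (Q z) = 0 := (o2 z).2.
have PP z : P (P z) = P z by exact: (congr1 (fun f => f z) (idm _ m1)).
have QQ z : Q (Q z) = Q z by exact: (congr1 (fun f => f z) (idm _ m3)).
have hQ : bounded_op Q := bo _ m3.
have QEBc z : Q (E (~` B) z) = Q z by rewrite eBc (bop_add hQ) QQ o2a addr0.
move=> x.
have hP : bounded_op P := bo _ m1.
have h1 : P (E B x) = P x by rewrite eB (bop_add hP) PP o1a addr0.
have h2 : Q (E B x) = 0 by rewrite -QEBc (o3 x).2 (bop_0 hQ).
have h3 : E B (P x) = P x by rewrite eB PP o1b addr0.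
have h4 : E B (Q x) = 0.
  have e : E (~` B) (Q x) = Q x by rewrite eBc QQ o2b addr0.
  by rewrite -e (o3 _).1.
by rewrite [E C (E B x)]eC [E C x]eC (bop_add (bo _ mB)) h1 h2 h3 h4.
Qed.
Theorem proposition2p14 (R : realType) (d : measure_display) (X : measurableType d)
    (A : completeNormedModType R[i]) (mul : A -> A -> A) (one : A) (star : A -> A)
    (H : completeNormedModType R[i]) (ip : H -> H -> R[i])
    (pi : A -> (H -> H)) (E : set X -> (H -> H)) :
  unital_cstar_algebra mul one star ->
  hilbert_space ip ->
  unital_star_hom mul one star ip pi ->
  spectral_measure ip E ->
  (forall (B : set X) (a : A), measurable B -> E B \o pi a = pi a \o E B) ->
  (instrument_irreducible pi E <-> irreducible_rep pi) /\
  (instrument_irreducible pi E ->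
     forall B : set X, measurable B -> E B = (fun _ => 0) \/ E B = id).
Proof.
move=> hA hHil hpi hE hcomm.
have piop a : bounded_op (pi a) := sh_bounded hpi a.
have further : instrument_irreducible pi E ->
    forall B : set X, measurable B -> E B = (fun _ => 0) \/ E B = id.
  move=> irr B mB.
  have hB := sm_bounded hE mB.
  have EE y : E B (E B y) = E B y by exact: (congr1 (fun f => f y) (sm_idem hE mB)).
  pose V := [set x | E B x = x].
  have iV : invariant_subspace [set T | exists B a, measurable B /\ T = spectral_instrument pi E B a] V.
    split.
    - by rewrite /V /= (bop_0 hB).
    - move=> k x y; rewrite /V /= => Vx Vy.
      by rewrite (hB.1 k x y) Vx Vy.
    - have -> : V = (E B - id) @^-1` [set 0].
        apply: sE => z; rewrite /V /= !fctE /=; split; first by move=> ->; rewrite subrr.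
        by move/eqP; rewrite subr_eq0 => /eqP.
      apply: preimage_closed.
        move=> z _; apply: continuousB; first exact: hB.2.
        exact: cvg_id.
      exact: (accessible_closed_set1 (hausdorff_accessible (@norm_hausdorff _ _))).
    - move=> T [B' [a [mB' ->]]] x; rewrite /V /spectral_instrument /= => Vx.
      have := congr1 (fun f => f (E B' x)) (hcomm B a mB) => /= ->.
      by rewrite (Ecomm hE _ _ mB' mB) Vx.
  case: (irr V iV) => hV; [left|right]; apply/funext => y.
    have : V (E B y) by rewrite /V /= EE.
    by rewrite hV.
  by have : V y by rewrite hV.
split; last exact: further.
split.
- move=> irr V [V0 Vlin Vcl Vinv]; apply: (irr V); split => //.
  move=> T [B [a [mB ->]]] x Vx; rewrite /spectral_instrument.
  case: (further irr B mB) => -> /=.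
    by rewrite (bop_0 (piop a)).
  by apply: (Vinv (pi a)) => //; exists a.
- move=> irr V [V0 Vlin Vcl Vinv]; apply: (irr V); split => //.
  move=> T [a _ <-] x Vx.
  have := Vinv (spectral_instrument pi E setT a) _ x Vx.
  rewrite /spectral_instrument (sm_total hE) /=; apply.
  by exists setT, a; split; [exact: measurableT | rewrite (sm_total hE)].
Qed.
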